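(* Let $d\ge 1$, $T\in\mathbb{Q}^d_{\ge 0}$, and let $\mathcal{V}_L\subseteq\mathbb{Q}^d_{\ge 0}$ be a finite set that is 3-incompatible with respect to $T$. Let $m$ be an integer with $|\mathcal{V}_L|/2\le m\le|\mathcal{V}_L|$ and set $C_2=|\mathcal{V}_L|-m$. Let $0\le p\le m$ and let $s(1),\dots,s(p)\in\mathbb{Q}^d_{\ge 0}$ with $s(i)\le T$ componentwise. Consider $m$ containers: for $i\in\{1,\dots,p\}$ a container of capacity $s(i)$, and $m-p$ further containers of capacity $T$. Let $\mathcal{C}=\{1,\dots,p\}$ if $p=m$, and $\mathcal{C}=\{1,\dots,p\}\cup\{\top\}$ with $s(\top)=T$ if $p<m$. Build the graph $G$ with vertex set $\mathcal{V}_L\cup\mathcal{V}_L'\cup\mathcal{B}$, where $\mathcal{V}_L'=\{v'\mid v\in\mathcal{V}_L\}$ is a set of new copies and $\mathcal{B}$ is a set of $2C_2$ new vertices; for each $c\in\mathcal{C}$ let $E_c=\{\{u,v\}\mid u\neq v\in\mathcal{V}_L,\ u+v\le s(c)\}\cup\{\{v,v'\}\mid v\in\mathcal{V}_L,\ v\le s(c)\}$ (inequalities componentwise), let $E_\bot=\{\{v',b\}\mid v'\in\mathcal{V}_L',b\in\mathcal{B}\}$, and $E(G)=E_\bot\cup\bigcup_{c\in\mathcal{C}}E_c$. Let the color set be $\mathcal{C}'=\mathcal{C}\cup\{\bot\}$ if $C_2>0$ and $\mathcal{C}'=\mathcal{C}$ if $C_2=0$, let $\lambda(e)=\{c\in\mathcal{C}'\mid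 e\in E_c\}$, $\gamma(e,c)=1$ for all $e$ and $c\in\lambda(e)$, and $\ell=|\mathcal{V}_L|+C_2$. Then there is an assignment of all vectors of $\mathcal{V}_L$ to the $m$ containers such that every container receives at least one vector and the sum of the vectors in each container is componentwise at most its capacity if and only if $(G,\mathcal{C}',\lambda,\gamma,\ell)$ is a ''yes''-instance of Perfect Over-The-Rainbow Matching.
   Context: A set $\mathcal{V}'\subseteq\mathbb{Q}^d_{\ge 0}$ is 3-incompatible with respect to $T$ if for any three distinct $u,v,w\in\mathcal{V}'$ there is a coordinate $j$ with $u^j+v^j+w^j>T^j$. Perfect Over-The-Rainbow Matching: given a graph $G$, a color set $\mathcal{C}'$, $\lambda:E(G)\to 2^{\mathcal{C}'}\setminus\{\emptyset\}$, weights $\gamma(e,c)\ge 0$ for $c\in\lambda(e)$, and a number $\ell$, the instance is a ''yes''-instance iff there exist a perfect matching $M$ of $G$ and a surjective map $\xi:M\to\mathcal{C}'$ with $\xi(e)\in\lambda(e)$ for all $e\in M$ and $\sum_{e\in M}\gamma(e,\xi(e))\le\ell$. *)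

(* Defs.v *)
From HB Require Import structures.
From mathcomp Require Import all_boot all_order all_algebra.
Set Implicit Arguments. Unset Strict Implicit. Unset Printing Implicit Defensive.
Import Order.TTheory GRing.Theory Num.Theory.
Local Open Scope ring_scope.

Definition vle (d : nat) (u w : 'rV[rat]_d) : bool := [forall j, u 0 j <= w 0 j].
Definition nonneg (d : nat) (u : 'rV[rat]_d) : bool := vle 0 u.

(* The finite set V_L is given as an injective family v : 'I_n -> Q^d (|V_L| = n). *)
Definition three_incompatible (d n : nat) (T : 'rV[rat]_d) (v : 'I_n -> 'rV[rat]_d) : Prop :=
  forall i j k : 'I_n, i != j -> j != k -> i != k ->
    exists c : 'I_d, T 0 c < (v i + v j + v k) 0 c.

(* Graph: vertex finType V, edges E : {set {set V}} (each edge a 2-element set). *)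
Definition perfect_matching (V : finType) (E M : {set {set V}}) : Prop :=
  M \subset E /\ forall x : V, #|[set e in M | x \in e]| = 1%N.

Definition potrm_yes (V K : finType) (E : {set {set V}}) (Cs : {set K})
  (lam : {set V} -> {set K}) (gam : {set V} -> K -> rat) (l : rat) : Prop :=
  exists (M : {set {set V}}) (xi : {set V} -> K),
    [/\ perfect_matching E M,
        (forall e, e \in M -> xi e \in Cs),
        (forall c, c \in Cs -> exists2 e, e \in M & xi e = c),
        (forall e, e \in M -> xi e \in lam e)
      & \sum_(e in M) gam e (xi e) <= l].

(* vertices: V_L (inl (inl i)), V_L' (inl (inr i)), B (inr b), |B| = 2*C2 *)
Definition vtx (n C2 : nat) : finType := (('I_n + 'I_n) + 'I_(2 * C2))%type.
Definition vL {n C2 : nat} (i : 'I_n) : vtx n C2 := inl (inl i).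
Definition vL' {n C2 : nat} (i : 'I_n) : vtx n C2 := inl (inr i).
Definition vB {n C2 : nat} (b : 'I_(2 * C2)) : vtx n C2 := inr b.

(* colors: inl i = container color i in {1..p}; inr true = top; inr false = bot *)
Definition color (p : nat) : finType := ('I_p + bool)%type.
Definition colTop {p : nat} : color p := inr true.
Definition colBot {p : nat} : color p := inr false.

Definition Cset (p m : nat) : {set color p} :=
  [set c : color p | match c with inl _ => true | inr true => (p < m)%N | inr false => false end].
Definition Cprime (p m C2 : nat) : {set color p} :=
  Cset p m :|: (if (0 < C2)%N then [set colBot] else set0).

Definition scap (d p : nat) (T : 'rV[rat]_d) (s : 'I_p -> 'rV[rat]_d) (c : color p) : 'rV[rat]_d :=
  match c with inl i => s i | inr _ => T end.

Definition Ecap (d n C2 : nat) (v : 'I_n -> 'rV[rat]_d) (S : 'rV[rat]_d) : {set {set vtx n C2}} :=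
  [set [set vL ij.1; vL ij.2] | ij : 'I_n * 'I_n & (ij.1 != ij.2) && vle (v ij.1 + v ij.2) S]
  :|: [set [set vL i; vL' i] | i : 'I_n & vle (v i) S].

Definition Ebot (n C2 : nat) : {set {set vtx n C2}} :=
  [set [set vL' ib.1; vB ib.2] | ib : 'I_n * 'I_(2 * C2)].

Definition Ecol (d n C2 p : nat) (T : 'rV[rat]_d) (v : 'I_n -> 'rV[rat]_d)
  (s : 'I_p -> 'rV[rat]_d) (c : color p) : {set {set vtx n C2}} :=
  match c with inr false => Ebot n C2 | _ => Ecap C2 v (scap T s c) end.

Definition EG (d n C2 p m : nat) (T : 'rV[rat]_d) (v : 'I_n -> 'rV[rat]_d)
  (s : 'I_p -> 'rV[rat]_d) : {set {set vtx n C2}} :=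
  Ebot n C2 :|: \bigcup_(c in Cset p m) Ecol C2 T v s c.

Definition lam (d n C2 p m : nat) (T : 'rV[rat]_d) (v : 'I_n -> 'rV[rat]_d)
  (s : 'I_p -> 'rV[rat]_d) (e : {set vtx n C2}) : {set color p} :=
  [set c in Cprime p m C2 | e \in Ecol C2 T v s c].

Definition cont_cap (d p q : nat) (T : 'rV[rat]_d) (s : 'I_p -> 'rV[rat]_d)
  (k : ('I_p + 'I_q)%type) : 'rV[rat]_d :=
  match k with inl i => s i | inr _ => T end.

(* Main.v *)
Require Import Defs.
From mathcomp Require Import all_boot all_order all_algebra.
From mathcomp Require Import zify lra.
Import Order.TTheory GRing.Theory Num.Theory.

Set Implicit Arguments. Unset Strict Implicit. Unset Printing Implicit Defensive.

Lemma pm_sum (V : finType) (M : {set {set V}}) :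
  (forall x, #|[set e in M | x \in e]| = 1%N) ->
  forall F : V -> nat, \sum_x F x = \sum_(e in M) \sum_(x in e) F x.
Proof.
move=> HM F.
transitivity (\sum_(e in M) \sum_x (x \in e) * F x)%N; last first.
  by apply: eq_bigr => e _; rewrite [RHS]big_mkcond /=; apply: eq_bigr => x _; case: (x \in e); rewrite ?mul1n ?mul0n.
rewrite exchange_big /=; apply: eq_bigr => x _.
rewrite -big_distrl /= -[X in X = _]mul1n; congr (_ * _)%N.
rewrite -(HM x) -sum1_card big_mkcond /= [in RHS]big_mkcond /=.
by apply: eq_bigr => e _; rewrite inE; case: (e \in M); case: (x \in e).
Qed.

Lemma sum_pair (V : finType) (a b : V) (F : V -> nat) :
  a != b -> (\sum_(x in [set a; b]) F x = F a + F b)%N.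
Proof.
by move=> ab; rewrite big_setU1 /= ?big_set1 // inE.
Qed.

Lemma enum_bij (T : finType) (A : {set T}) k : #|A| = k ->
  exists g : 'I_k -> T, injective g /\ forall x, x \in A <-> exists b, g b = x.
Proof.
move=> <-; exists (fun b => enum_val b); split; first exact: enum_val_inj.
move=> x; split; first by move=> xA; exists (enum_rank_in xA x); rewrite enum_rankK_in.
by case=> b <-; exact: enum_valP.
Qed.

Lemma uniq_edge (V : finType) (M : {set {set V}}) x e1 e2 :
  #|[set e in M | x \in e]| = 1%N -> e1 \in M -> x \in e1 -> e2 \in M -> x \in e2 -> e1 = e2.
Proof.
move=> /eqP/cards1P [e He] h1 h2 h3 h4.
have : e1 \in [set e in M | x \in e] by rewrite inE h1 h2.
have : e2 \in [set e in M | x \in e] by rewrite inE h3 h4.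
by rewrite He !inE => /eqP -> /eqP ->.
Qed.

Lemma inv_pm (V : finType) (mate : V -> V) : involutive mate ->
  forall x, #|[set e in [set [set y; mate y] | y : V] | x \in e]| = 1%N.
Proof.
move=> inv x; apply/eqP/cards1P; exists [set x; mate x]; apply/setP => e.
rewrite !inE; apply/idP/idP.
  case/andP => /imsetP [y _ ->]; rewrite !inE => /orP [/eqP ->| /eqP ->] //.
  by rewrite inv setUC.
move/eqP ->; rewrite !inE eqxx andbT; apply/imsetP; by exists x.
Qed.

Lemma sum_pairR (V : finType) (R : nmodType) (a b : V) (F : V -> R) :
  a != b -> (\sum_(x in [set a; b]) F x = F a + F b)%R.
Proof. by move=> ab; rewrite big_setU1 /= ?big_set1 // inE. Qed.

Lemma Ecap_inv d n C2 (v : 'I_n -> 'rV[rat]_d) S (e : {set vtx n C2}) :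
  e \in Ecap C2 v S ->
  (exists a b, [/\ a != b, vle (v a + v b) S & e = [set vL a; vL b]]) \/
  (exists a, vle (v a) S /\ e = [set vL a; vL' a]).
Proof.
rewrite inE => /orP [/imsetP [[a b] hab ->]| /imsetP [a ha ->]].
  move: hab; rewrite inE /= => /andP [ab hv].
  by left; exists a, b.
by right; exists a; move: ha; rewrite inE.
Qed.

Lemma Ebot_inv n C2 (e : {set vtx n C2}) :
  e \in Ebot n C2 -> exists a b, e = [set vL' a; vB b].
Proof. by case/imsetP => [[a b] _ ->]; exists a, b. Qed.

Lemma Ecol_inv d n C2 p T (v : 'I_n -> 'rV[rat]_d) (s : 'I_p -> 'rV[rat]_d) c (e : {set vtx n C2}) :
  e \in Ecol C2 T v s c ->
  (c = colBot /\ exists a b, e = [set vL' a; vB b]) \/ (c != colBot /\ e \in Ecap C2 v (scap T s c)).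
Proof.
case: c => [j|[]] /= h; [by right | by right | left; split => //; exact: Ebot_inv].
Qed.

Definition isLL' n C2 (x : vtx n C2) : nat := if x is inl _ then 1%N else 0%N.
Definition isB n C2 (x : vtx n C2) : nat := if x is inr _ then 1%N else 0%N.
Definition hasL n C2 (e : {set vtx n C2}) : bool := [exists i, vL i \in e].

Lemma hasLP n C2 (e : {set vtx n C2}) : reflect (exists i, vL i \in e) (hasL e).
Proof. exact: existsP. Qed.

Definition eform n C2 (e : {set vtx n C2}) : Prop :=
  (exists a b, a != b /\ e = [set vL a; vL b]) \/
  (exists a, e = [set vL a; vL' a]) \/
  (exists a b, e = [set vL' a; vB b]).

Lemma Ecol_eform d n C2 p T (v : 'I_n -> 'rV[rat]_d) (s : 'I_p -> 'rV[rat]_d) c (e : {set vtx n C2}) :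
  e \in Ecol C2 T v s c -> eform e.
Proof.
case/Ecol_inv => [[_ [a [b ->]]]|[_ /Ecap_inv [[a [b [ab _ ->]]]|[a [_ ->]]]]].
- by right; right; exists a, b.
- by left; exists a, b.
- by right; left; exists a.
Qed.

Lemma eform_card n C2 (e : {set vtx n C2}) : eform e -> (\sum_(x in e) 1 = 2)%N.
Proof.
case=> [[a [b [ab ->]]]|[[a ->]|[a [b ->]]]]; rewrite sum_pair //.
Qed.

Lemma eform_count n C2 (e : {set vtx n C2}) : eform e ->
  (\sum_(x in e) isLL' x = 2 * hasL e + \sum_(x in e) isB x)%N.
Proof.
case=> [[a [b [ab ->]]]|[[a ->]|[a [b ->]]]]; rewrite !sum_pair //=; try (by apply: contra ab => /eqP [->]).
- have -> : hasL [set @vL n C2 a; vL b] by apply/hasLP; exists a; rewrite !inE eqxx.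
  by [].
- have -> : hasL [set @vL n C2 a; vL' a] by apply/hasLP; exists a; rewrite !inE eqxx.
  by [].
- have -> : hasL [set @vL' n C2 a; vB b] = false.
    by apply/negbTE/hasLP => -[i]; rewrite !inE.
  by [].
Qed.

Lemma sum_isLL' n C2 : (\sum_(x : vtx n C2) isLL' x = n + n)%N.
Proof.
by rewrite big_sumType /= big_sumType /= !sum_nat_const !card_ord !muln1 muln0 addn0.
Qed.

Lemma sum_isB n C2 : (\sum_(x : vtx n C2) isB x = 2 * C2)%N.
Proof.
by rewrite big_sumType /= big_sumType /= !sum_nat_const !card_ord !muln1 !muln0.
Qed.

Lemma sum_one n C2 : (\sum_(x : vtx n C2) 1 = n + n + 2 * C2)%N.
Proof.
by rewrite big_sumType /= big_sumType /= !sum_nat_const !card_ord !muln1.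
Qed.

Lemma vle_trans d (a b c : 'rV[rat]_d) : vle a b -> vle b c -> vle a c.
Proof.
move=> /forallP h1 /forallP h2; apply/forallP => j; exact: le_trans (h1 j) (h2 j).
Qed.

Lemma lam_inv d n C2 p m T (v : 'I_n -> 'rV[rat]_d) (s : 'I_p -> 'rV[rat]_d) e c :
  c \in @lam d n C2 p m T v s e -> c \in Cprime p m C2 /\ e \in Ecol C2 T v s c.
Proof. by rewrite inE => /andP. Qed.

Lemma lam_EG d n C2 p m T (v : 'I_n -> 'rV[rat]_d) (s : 'I_p -> 'rV[rat]_d) e c :
  c \in @lam d n C2 p m T v s e -> e \in @EG d n C2 p m T v s.
Proof.
move=> /lam_inv [hc he]; rewrite /EG inE.
case: c hc he => [j|[]] hc he /=.
- by apply/orP; right; apply/bigcupP; exists (inl j) => //; rewrite inE.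
- apply/orP; right; apply/bigcupP; exists (inr true) => //.
  by move: hc; rewrite /Cprime !inE /=; case: (0 < C2)%N; rewrite ?inE ?orbF.
- by move: he => /= ->.
Qed.

Lemma vL_eq n C2 (i j : 'I_n) : (@vL n C2 i == vL j) = (i == j).
Proof. by rewrite /vL /=. Qed.
Lemma vL'_eq n C2 (i j : 'I_n) : (@vL' n C2 i == vL' j) = (i == j).
Proof. by rewrite /vL' /=. Qed.
Lemma vB_eq n C2 (i j : 'I_(2 * C2)) : (@vB n C2 i == vB j) = (i == j).
Proof. by rewrite /vB /=. Qed.
Lemma vL_vL' n C2 (i j : 'I_n) : (@vL n C2 i == vL' j) = false.
Proof. by []. Qed.
Lemma vL'_vL n C2 (i j : 'I_n) : (@vL' n C2 i == vL j) = false.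
Proof. by []. Qed.
Lemma vL_vB n C2 i j : (@vL n C2 i == vB j) = false.
Proof. by []. Qed.
Lemma vB_vL n C2 i j : (@vB n C2 i == vL j) = false.
Proof. by []. Qed.
Lemma vL'_vB n C2 i j : (@vL' n C2 i == vB j) = false.
Proof. by []. Qed.
Lemma vB_vL' n C2 i j : (@vB n C2 i == vL' j) = false.
Proof. by []. Qed.
Definition veqE := (vL_eq, vL'_eq, vB_eq, vL_vL', vL'_vL, vL_vB, vB_vL, vL'_vB, vB_vL').

Local Open Scope ring_scope.

Lemma vle_refl d (a : 'rV[rat]_d) : vle a a.
Proof. by apply/forallP => j. Qed.

Lemma scap_le d p (T : 'rV[rat]_d) (s : 'I_p -> 'rV[rat]_d) c :
  (forall i, vle (s i) T) -> vle (scap T s c) T.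
Proof. by case: c => [j|b] hs //=; exact: vle_refl. Qed.

Lemma memL n C2 (i a b : 'I_n) : (@vL n C2 i \in [set vL a; vL b]) = (i \in [set a; b]).
Proof. by rewrite !inE !veqE ?orbF. Qed.

Lemma memL' n C2 (i a : 'I_n) : (@vL n C2 i \in [set vL a; vL' a]) = (i \in [set a]).
Proof. by rewrite !inE !veqE ?orbF. Qed.

Lemma backward d n m p (T : 'rV[rat]_d) (v : 'I_n -> 'rV[rat]_d) (s : 'I_p -> 'rV[rat]_d) :
  (n <= 2 * m)%N -> (m <= n)%N -> (forall i, vle (s i) T) ->
  potrm_yes (@EG d n (n - m) p m T v s) (Cprime p m (n - m)) (@lam d n (n - m) p m T v s)
            (fun _ _ => 1) (n + (n - m))%:R ->
  (exists f : 'I_n -> ('I_p + 'I_(m - p))%type,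
      (forall k, exists i, f i = k) /\
      (forall k, vle (\sum_(i | f i == k) v i) (cont_cap T s k))).
Proof.
move=> hn2m hmn hsT [M [xi [[MsubE Hpm] HxiC Hsurj Hlam _]]].
have Hform : forall e, e \in M -> eform e.
  by move=> e he; case: (lam_inv (Hlam e he)) => _ /Ecol_eform.
have HL : forall e, e \in M -> hasL e ->
    xi e != colBot /\ e \in Ecap (n - m) v (scap T s (xi e)).
  move=> e he hL; case: (lam_inv (Hlam e he)) => _ /Ecol_inv [[_ [a [b he']]]|//].
  by move: hL; rewrite he' => /hasLP [i]; rewrite !inE.
pose eo x := odflt set0 [pick e in M | x \in e].
have eoP : forall x, eo x \in M /\ x \in eo x.
  move=> x; rewrite /eo; case: pickP => [e /andP [h1 h2] //|hn].
  have := Hpm x; have -> : [set e in M | x \in e] = set0.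
    by apply/setP => e; rewrite !inE; move: (hn e) => /= ->.
  by rewrite cards0.
have eoU : forall x e, e \in M -> x \in e -> e = eo x.
  move=> x e he hx; case: (eoP x) => h1 h2; exact: uniq_edge (Hpm x) he hx h1 h2.
pose G := [set e in M | hasL e].
have cardG : #|G| = m.
  have h1 := pm_sum Hpm (@isLL' n (n - m)); rewrite sum_isLL' in h1.
  have h2 := pm_sum Hpm (@isB n (n - m)); rewrite sum_isB in h2.
  have h3 : (\sum_(e in M) \sum_(x in e) isLL' x = 2 * #|G| + \sum_(e in M) \sum_(x in e) isB x)%N.
    rewrite (eq_bigr _ (fun e he => eform_count (Hform e he))) big_split /= -big_distrr /=.
    congr (2 * _ + _)%N; rewrite -sum1_card big_mkcond [RHS]big_mkcond /=.
    by apply: eq_bigr => e _; rewrite inE; case: (e \in M); case: (hasL e).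
  lia.
have Cj : forall j : 'I_p, (inl j : color p) \in Cprime p m (n - m).
  by move=> j; rewrite !inE.
pose rep j := odflt set0 [pick e in M | xi e == inl j].
have repP : forall j, rep j \in M /\ xi (rep j) = inl j.
  move=> j; rewrite /rep; case: pickP => [e /andP [h1 /eqP h2] //|hn].
  case: (Hsurj _ (Cj j)) => e he hx; move: (hn e) => /=; by rewrite he hx eqxx.
have rep_inj : injective rep.
  by move=> j1 j2 h; have := (repP j1).2; rewrite h (repP j2).2 => -[].
have M_hasL : forall e, e \in M -> xi e != colBot -> hasL e.
  move=> e he hb; case: (lam_inv (Hlam e he)) => _ /Ecol_inv [[hb' _]|[_ /Ecap_inv]].
    by rewrite hb' eqxx in hb.
  case=> [[a [b [_ _ ->]]]|[a [_ ->]]]; apply/hasLP; exists a; by rewrite !inE eqxx.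
pose R := rep @: [set: 'I_p].
have RG : R \subset G.
  apply/subsetP => e /imsetP [j _ ->]; rewrite inE (repP j).1 /=.
  by apply: M_hasL; rewrite ?(repP j).1 ?(repP j).2.
have cardR : #|R| = p by rewrite card_imset // cardsT card_ord.
have cardGR : #|G :\: R| = (m - p)%N by rewrite cardsD (setIidPr RG) cardG cardR.
have [g [ginj gP]] := enum_bij cardGR.
have dflt : 'I_n -> ('I_p + 'I_(m - p))%type.
  move=> i; case: (ltnP 0 p) => hp; first exact: (inl (Ordinal hp)).
  have h : (0 < m - p)%N by have := ltn_ord i; lia.
  exact: (inr (Ordinal h)).
pose f i := let e := eo (vL i) in
  if [pick j | rep j == e] is Some j then inl j
  else if [pick k | g k == e] is Some k then inr k else dflt i.
pose Ef c := match c with inl j => rep j | inr k => g k end.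
have EfG : forall c, Ef c \in G.
  case=> [j|k] /=; first by apply: (subsetP RG); apply/imsetP; exists j.
  by have := (gP (g k)).2 (ex_intro _ k erefl); rewrite inE => /andP [].
have key : forall i c, (f i == c) = (Ef c == eo (vL i)).
  move=> i c; have eG : eo (vL i) \in G.
    by rewrite inE (eoP _).1 /=; apply/hasLP; exists i; exact: (eoP _).2.
  rewrite /f /=; case: pickP => [j /eqP hj | hn].
    case: c => [j'|k] /=; first by rewrite -hj (inj_eq rep_inj) eq_sym.
    apply/esym/negbTE/eqP => hg.
    have := (gP (g k)).2 (ex_intro _ k erefl); rewrite inE hg -hj.
    by rewrite (_ : rep j \in R) //; apply/imsetP; exists j.
  have : eo (vL i) \in G :\: R.
    rewrite inE eG andbT; apply/imsetP => -[j _ hj].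
    by move: (hn j); rewrite /= -hj eqxx.
  case/gP => k0 hk0.
  case: pickP => [k' /eqP hk'| hn']; last by move: (hn' k0); rewrite /= hk0 eqxx.
  case: c => [j'|k] /=; first by move: (hn j') => /= ->.
  by rewrite -hk' (inj_eq ginj) eq_sym.
exists f; split.
  move=> c; have := EfG c; rewrite inE => /andP [h1 /hasLP [i hi]].
  by exists i; apply/eqP; rewrite key (eoU _ _ h1 hi).
move=> c; have := EfG c; rewrite inE => /andP [EM EL].
have hsum : \sum_(i | f i == c) v i = \sum_(i | vL i \in Ef c) v i.
  apply: eq_bigl => i; rewrite key; apply/eqP/idP => [->|h]; first exact: (eoP _).2.
  exact: (eoU _ _ EM h).
have [hb hcap] := HL _ EM EL.
have hS : vle (scap T s (xi (Ef c))) (cont_cap T s c).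
  case: c {hsum hb hcap EM EL} => [j|k] /=; last exact: scap_le.
  by rewrite (repP j).2 /=; exact: vle_refl.
rewrite hsum; case/Ecap_inv: hcap => [[a [b [ab hv hEq]]]|[a [hv hEq]]]; rewrite hEq.
  rewrite (eq_bigl (fun i => i \in [set a; b])); last by move=> i; exact: memL.
  by rewrite sum_pairR //; exact: vle_trans hv hS.
rewrite (eq_bigl (fun i => i \in [set a])); last by move=> i; exact: memL'.
by rewrite big_set1; exact: vle_trans hv hS.
Qed.

Definition col p q (k : ('I_p + 'I_q)%type) : color p :=
  match k with inl j => inl j | inr _ => inr true end.

Lemma no_three d n m p (T : 'rV[rat]_d) (v : 'I_n -> 'rV[rat]_d) (s : 'I_p -> 'rV[rat]_d)
  (f : 'I_n -> ('I_p + 'I_(m - p))%type) :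
  (forall i, nonneg (v i)) -> three_incompatible T v -> (forall i, vle (s i) T) ->
  (forall k, vle (\sum_(i | f i == k) v i) (cont_cap T s k)) ->
  forall i j k, i != j -> j != k -> i != k -> f j = f i -> f k = f i -> False.
Proof.
move=> hv h3 hsT fcap i j k ij jk ik hj hk.
have [c hc] := h3 i j k ij jk ik.
have hcapT : vle (cont_cap T s (f i)) T by case: (f i) => [x|x] /=; [exact: hsT | exact: vle_refl].
have := vle_trans (fcap (f i)) hcapT => /forallP /(_ c).
rewrite summxE (bigD1 i) ?eqxx //= (bigD1 j) ?hj ?eqxx 1?eq_sym //= (bigD1 k) ?hk ?eqxx ?(eq_sym k) ?ik ?jk //=.
have h0 : 0 <= \sum_(i0 < n | (f i0 == f i) && (i0 != i) && (i0 != j) && (i0 != k)) v i0 0 c.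
  apply: sumr_ge0 => l _; have /forallP /(_ c) := hv l; by rewrite mxE.
have : v i 0 c + v j 0 c + v k 0 c > T 0 c by move: hc; rewrite !mxE.
move: h0; set S := \sum_(i0 < n | _) _ => h0 h1 h2.
move: h0 h1 h2; clearbody S; move: (v i 0 c) (v j 0 c) (v k 0 c) (T 0 c) S; clear => a b c0 t S h0 h1 h2; lra.
Qed.

Lemma forward d n m p (T : 'rV[rat]_d) (v : 'I_n -> 'rV[rat]_d) (s : 'I_p -> 'rV[rat]_d) :
  (forall i, nonneg (v i)) -> three_incompatible T v -> (forall i, vle (s i) T) ->
  (n <= 2 * m)%N -> (m <= n)%N -> (p <= m)%N ->
  (exists f : 'I_n -> ('I_p + 'I_(m - p))%type,
      (forall k, exists i, f i = k) /\
      (forall k, vle (\sum_(i | f i == k) v i) (cont_cap T s k))) ->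
  potrm_yes (@EG d n (n - m) p m T v s) (Cprime p m (n - m)) (@lam d n (n - m) p m T v s)
            (fun _ _ => 1) (n + (n - m))%:R.
Proof.
move=> hv h3 hsT hn2m hmn hpm [f [fsurj fcap]].
have N3 := no_three hv h3 hsT fcap.
pose po i := [pick j | (f j == f i) && (j != i)].
have pS : forall i j, po i = Some j -> [/\ f j = f i, j != i & po j = Some i].
  move=> i j; rewrite /po; case: pickP => [j' /andP [/eqP h1 h2] [<-]|//].
  split => //; case: pickP => [l /andP [/eqP h3' h4]|hn].
    case: (eqVneq l i) => [-> //|li].
    by exfalso; apply: (N3 i j' l); rewrite // 1?eq_sym // h3' h1.
  by move: (hn i); rewrite /= h1 eqxx (eq_sym i) h2.
have pN : forall i, po i = None -> forall l, f l = f i -> l = i.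
  move=> i; rewrite /po; case: pickP => // hn _ l hl.
  by apply/eqP; move: (hn l); rewrite /= hl eqxx /= => /negbFE.
have fibP : forall i l, (f l == f i) = (l \in (if po i is Some j then [set i; j] else [set i])).
  move=> i l; case hp: (po i) => [j|].
    have [h1 h2 _] := pS _ _ hp; rewrite !inE.
    apply/idP/idP => [/eqP hl|/orP [/eqP ->|/eqP ->]]; rewrite ?h1 ?eqxx //.
    case: (eqVneq l i) => //= li; case: (eqVneq l j) => // lj.
    by exfalso; apply: (N3 i j l); rewrite // 1?eq_sym.
  rewrite inE; apply/idP/idP => [/eqP /(pN _ hp) ->|/eqP ->] //.
pose A := [set i | po i != None].
have cardA : #|A| = (2 * (n - m))%N.
  have hc : forall c, (\sum_(i | true && (f i == c)) (i \in A : nat) + 2 =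
                        2 * \sum_(i | true && (f i == c)) 1)%N.
    move=> c; have [i0 <-] := fsurj c.
    case hp: (po i0) => [j|].
      have [_ ji hpj] := pS _ _ hp.
      rewrite (eq_bigl (fun l => l \in [set i0; j])); last by move=> l; rewrite /= fibP hp.
      rewrite [in RHS](eq_bigl (fun l => l \in [set i0; j])); last by move=> l; rewrite /= fibP hp.
      by rewrite !sum_pair 1?eq_sym // !inE hp hpj.
    rewrite (eq_bigl (fun l => l \in [set i0])); last by move=> l; rewrite /= fibP hp.
    rewrite [in RHS](eq_bigl (fun l => l \in [set i0])); last by move=> l; rewrite /= fibP hp.
    by rewrite !big_set1 inE hp.
  have e1 : (\sum_(i : 'I_n) 1 = n)%N by rewrite sum_nat_const card_ord muln1.
  have e2 : (\sum_(i : 'I_n) (i \in A : nat) = #|A|)%N.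
    by rewrite -sum1_card [RHS]big_mkcond /=; apply: eq_bigr => i _; case: (i \in A).
  rewrite (partition_big f xpredT) // in e1.
  rewrite (partition_big f xpredT) // in e2.
  have hX : (\sum_(c : ('I_p + 'I_(m - p))%type) (\sum_(i | true && (f i == c)) (i \in A : nat) + 2) =
             \sum_(c : ('I_p + 'I_(m - p))%type) 2 * \sum_(i | true && (f i == c)) 1)%N.
    by apply: eq_bigr => c _; exact: hc.
  rewrite big_split -big_distrr /= sum_nat_const card_sum !card_ord e1 e2 in hX.
  lia.
have [g [ginj gP]] := enum_bij cardA.
have gA : forall b, po (g b) != None by move=> b; have := (gP (g b)).2 (ex_intro _ b erefl); rewrite inE.
pose bidx i := [pick b | g b == i].
have bidxA : forall i j, po i = Some j -> exists2 b, bidx i = Some b & g b = i.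
  move=> i j hp; have : i \in A by rewrite inE hp.
  case/gP => b hb; rewrite /bidx; case: pickP => [b' /eqP hb'|hn]; first by exists b'.
  by move: (hn b); rewrite /= hb eqxx.
pose mate (x : vtx n (n - m)) : vtx n (n - m) := match x with
  | inl (inl i) => if po i is Some j then vL j else vL' i
  | inl (inr i) => if po i is Some _ then (if bidx i is Some b then vB b else vL i) else vL i
  | inr b => vL' (g b) end.
have mateL : forall i, mate (vL i) = if po i is Some j then vL j else vL' i by [].
have mateL' : forall i, mate (vL' i) = if po i is Some _ then (if bidx i is Some b then vB b else vL i) else vL i by [].
have mateB : forall b, mate (vB b) = vL' (g b) by [].
have mate_inv : involutive mate.
  case=> [[i|i]|b].
  - rewrite -[inl (inl i)]/(vL i) mateL; case hp: (po i) => [j|]; last by rewrite mateL' hp.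
    by have [_ _ hpj] := pS _ _ hp; rewrite mateL hpj.
  - rewrite -[inl (inr i)]/(vL' i) mateL'; case hp: (po i) => [j|]; last by rewrite mateL hp.
    by have [b hb hgb] := bidxA _ _ hp; rewrite hb mateB hgb.
  - rewrite -[inr b]/(vB b) mateB mateL'; case hp: (po (g b)) => [j|]; last by move: (gA b); rewrite hp.
    have [b' hb' hgb] := bidxA _ _ hp; rewrite hb'; congr vB; exact: ginj.
have Hpm := inv_pm mate_inv.
pose M := [set [set x; mate x] | x : vtx n (n - m)].
pose xi (e : {set vtx n (n - m)}) : color p := if [pick i | vL i \in e] is Some i then col (f i) else colBot.
have colCp : forall k : ('I_p + 'I_(m - p))%type, col k \in Cprime p m (n - m).
  case=> [j|o] /=; rewrite /Cprime !inE /= //; apply/orP; left; have := ltn_ord o; lia.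
have EcolE : forall k : ('I_p + 'I_(m - p))%type, Ecol (n - m) T v s (col k) = Ecap (n - m) v (cont_cap T s k) by case.
have sumF : forall i, \sum_(l | f l == f i) v l = if po i is Some j then v i + v j else v i.
  move=> i; rewrite (eq_bigl (fun l => l \in (if po i is Some j then [set i; j] else [set i]))); last by move=> l; rewrite fibP.
  case hp: (po i) => [j|]; last by rewrite big_set1.
  by rewrite sum_pairR //; have [_ ? _] := pS _ _ hp; rewrite eq_sym.
have xiL : forall i, xi [set vL i; mate (vL i)] = col (f i).
  move=> i; rewrite /xi mateL; case: pickP => [i' hi'|hn]; last first.
    by move: (hn i); case: (po i) => [j|]; rewrite /= !inE eqxx.
  congr col; case hp: (po i) hi' => [j|] hi'.
    rewrite memL !inE in hi'; case/orP: hi' => /eqP -> //.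
    by have [-> _ _] := pS _ _ hp.
  by move: hi'; rewrite memL' inE => /eqP ->.
have lamL : forall i, xi [set vL i; mate (vL i)] \in lam m T v s [set vL i; mate (vL i)].
  move=> i; rewrite xiL inE colCp /= EcolE.
  have := fcap (f i); rewrite sumF.
  case hp: (po i) => [j|] hc; rewrite inE; apply/orP; [left|right]; apply/imsetP.
    exists (i, j) => //; rewrite inE /= hc andbT; have [_ ? _] := pS _ _ hp; by rewrite eq_sym.
  by exists i => //; rewrite inE.
have lamL' : forall i, xi [set vL' i; mate (vL' i)] \in lam m T v s [set vL' i; mate (vL' i)].
  move=> i; rewrite mateL'; case hp: (po i) => [j|]; last first.
    have -> : [set vL' i; vL i] = [set vL i; mate (vL i)] by rewrite mateL hp setUC.
    exact: lamL.
  have [b hb hgb] := bidxA _ _ hp; rewrite hb.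
  have -> : xi [set vL' i; vB b] = colBot.
    by rewrite /xi; case: pickP => [i' |//]; rewrite !inE !veqE.
  have hpos : (0 < n - m)%N by have := ltn_ord b; lia.
  rewrite inE; apply/andP; split; first by rewrite /Cprime inE hpos !inE orbT.
  by apply/imsetP; exists (i, b).
have swap : forall x, [set x; mate x] = [set mate x; mate (mate x)] by move=> x; rewrite mate_inv setUC.
have lamAll : forall x, xi [set x; mate x] \in lam m T v s [set x; mate x].
  case=> [[i|i]|b]; [exact: lamL i | exact: lamL' i | ].
  by rewrite (swap (inr b)) -[inr b]/(vB b) mateB; exact: lamL'.
exists M, xi; split.
- split; last exact: Hpm.
  by apply/subsetP => e /imsetP [x _ ->]; exact: lam_EG (lamAll x).
- by move=> e /imsetP [x _ ->]; exact: (lam_inv (lamAll x)).1.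
- move=> c; case: c => [j|[]] hc.
  + have [i hi] := fsurj (inl j); exists [set vL i; mate (vL i)]; last by rewrite xiL hi.
    by apply/imsetP; exists (vL i).
  + have hpm' : (0 < m - p)%N.
      by move: hc; rewrite /Cprime !inE /=; case: (0 < n - m)%N; rewrite ?inE ?orbF /=; lia.
    have [i hi] := fsurj (inr (Ordinal hpm')); exists [set vL i; mate (vL i)]; last by rewrite xiL hi.
    by apply/imsetP; exists (vL i).
  + have hpos : (0 < 2 * (n - m))%N.
      by move: hc; rewrite /Cprime !inE /=; case: (ltnP 0 (n - m)) => h; rewrite ?inE //=; lia.
    exists [set vB (Ordinal hpos); mate (vB (Ordinal hpos))]; first by apply/imsetP; exists (vB (Ordinal hpos)).
    by rewrite mateB /xi; case: pickP => [i' |//]; rewrite !inE !veqE.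
- by move=> e /imsetP [x _ ->]; exact: lamAll.
rewrite sumr_const ler_nat.
have h := pm_sum Hpm (fun _ => 1%N); rewrite sum_one in h.
rewrite (eq_bigr (fun _ => 2%N)) in h; last first.
  by move=> e /imsetP [x _ ->]; exact: eform_card (Ecol_eform (lam_inv (lamAll x)).2).
rewrite sum_nat_const -/M in h; lia.
Qed.

Unset Implicit Arguments.

Theorem lemma6 (d n m p : nat) (T : 'rV[rat]_d) (v : 'I_n -> 'rV[rat]_d)
  (s : 'I_p -> 'rV[rat]_d) :
  (1 <= d)%N ->
  nonneg T ->
  injective v ->
  (forall i, nonneg (v i)) ->
  three_incompatible T v ->
  (n <= 2 * m)%N -> (m <= n)%N ->
  (p <= m)%N ->
  (forall i, nonneg (s i) && vle (s i) T) ->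
  (exists f : 'I_n -> ('I_p + 'I_(m - p))%type,
      (forall k, exists i, f i = k) /\
      (forall k, vle (\sum_(i | f i == k) v i) (cont_cap T s k)))
  <->
  potrm_yes (@EG d n (n - m) p m T v s) (Cprime p m (n - m)) (@lam d n (n - m) p m T v s)
            (fun _ _ => 1) (n + (n - m))%:R.
Proof.
move=> hd hT vinj hv h3 hn2m hmn hpm hs.
have hsT : forall i, vle (s i) T by move=> i; case/andP: (hs i).
split; [exact: forward | exact: backward].
Qed.
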